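(* Consider Algorithm PDS-SPP described in the context, with nonnegative $\lambda_k,\tau_k$ and positive $\beta_k,p_k$, and suppose $$\tau_1=0,\quad \beta_k\tau_k\le\beta_{k-1}(\tau_{k-1}+1),\quad \beta_{k-1}=\beta_k\lambda_k,\quad \tilde L\lambda_k\le p_{k-1}\tau_k\quad\text{for all }k\ge2.$$ Let $$A=\sum_{k=1}^N\beta_k\Big[-\langle\hat x_k,y\rangle+\langle x,y_k\rangle+\langle y_k,\hat x_k-x\rangle-\tilde f^*(y_k)+\tilde f^*(y)+\frac{p_k}{T_k}\sum_{t=1}^{T_k}V(x_{k-1},x_k^t)\Big].$$ Then for all $(x,y)\in\mathcal X\times\mathcal Y$, $$A\ge-\beta_N\langle x_{N-1}-\hat x_N,y_N-y\rangle+\frac{\beta_Np_N}{2}\|x_{N-1}-\hat x_N\|^2+\beta_N(\tau_N+1)W(y_N,y).$$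
   Context: Setting. $\mathcal X$ closed convex subset of a finite-dimensional space with norm $\|\cdot\|$ (dual $\|\cdot\|_*$); $\mathcal Z$ closed convex with norm $|\cdot|$; $\mathcal A$ linear; $h$ convex on $\mathcal Z$; $\mu\ge0$; $\nu$ $1$-strongly convex on $\mathcal X$ w.r.t. $\|\cdot\|$; $\tilde f$ convex differentiable with $\nabla\tilde f$ $\tilde L$-Lipschitz w.r.t. $\|\cdot\|$; $\tilde f^*$ its conjugate, $\mathcal Y=\mathrm{dom}\,\tilde f^*$; $\zeta$ $1$-strongly convex on $\mathcal Z$ w.r.t. $|\cdot|$. $U,V,W$ are the Bregman functions of $\zeta,\nu,\tilde f^*$: e.g. $W(v,y)=\tilde f^*(y)-\tilde f^*(v)-\langle(\tilde f^* )'(v),y-v\rangle$. Algorithm PDS-SPP: $x_0\in\mathcal X$, $y_0\in\mathcal Y$, $z_0\in\mathcal Z$, $\hat x_0=x_{-1}=x_0$; for $k=1,\dots,N$: $\tilde x_k=x_{k-1}+\lambda_k(\hat x_{k-1}-x_{k-2})$, $y_k=\arg\min_{y\in\mathcal Y}\langle-\tilde x_k,y\rangle+\tilde f^*(y)+\tau_kW(y_{k-1},y)$; $x_k^0=x_{k-1}$, $z_k^0=z_{k-1}$, $x_k^{-1}=x_{k-1}^{T_{k-1}-1}$ ($x_1^{-1}=x_0$); for $t=1,\dots,T_k$: $\tilde u_k^t=x_k^{t-1}+\alpha_k^t(x_k^{t-1}-x_k^{t-2})$, $z_k^t=\arg\min_{z\in\mathcal Z}h(z)+\langle-\mathcal A\tilde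 u_k^t,z\rangle+q_k^tU(z_k^{t-1},z)$, $x_k^t=\arg\min_{x\in\mathcal X}\mu\nu(x)+\langle y_k+\mathcal A^\top z_k^t,x\rangle+\eta_k^tV(x_k^{t-1},x)+p_kV(x_{k-1},x)$; $x_k=x_k^{T_k}$, $z_k=z_k^{T_k}$, $\hat x_k=\frac1{T_k}\sum_tx_k^t$, $\hat z_k=\frac1{T_k}\sum_tz_k^t$. Here $T_k$ are positive integers and $q_k^t,\eta_k^t$ positive reals. *)

(* Defs.v *)
From mathcomp Require Import all_boot all_algebra all_classical all_reals all_analysis.
Set Implicit Arguments. Unset Strict Implicit. Unset Printing Implicit Defensive.
Import GRing.Theory Num.Theory.
Local Open Scope ring_scope.
Local Open Scope classical_set_scope.

(* Finite-dimensional real space R^n, as row vectors (with the product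
   topology of analysis, hence the R^o). *)
Notation vec R n := 'rV[R^o]_n.

Section Defs.
Variable R : realType.

Definition dot n (u v : vec R n) : R := \sum_(i < n) u 0 i * v 0 i.

Definition is_norm n (nrm : vec R n -> R) : Prop :=
  [/\ forall x, 0 <= nrm x,
      forall x, nrm x = 0 -> x = 0,
      forall (a : R) x, nrm (a *: x) = `|a| * nrm x
    & forall x y, nrm (x + y) <= nrm x + nrm y].

Definition dual_norm n (nrm : vec R n -> R) (y : vec R n) : R :=
  sup [set dot y x | x in [set x | nrm x <= 1]].

Definition convex_on n (S : set (vec R n)) (f : vec R n -> R) : Prop :=
  forall x y (t : R), S x -> S y -> 0 <= t <= 1 ->
    f (t *: x + (1 - t) *: y) <= t * f x + (1 - t) * f y.

Definition strongly_convex1_on n (S : set (vec R n)) (nrm : vec R n -> R)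
    (f : vec R n -> R) : Prop :=
  forall x y (t : R), S x -> S y -> 0 <= t <= 1 ->
    f (t *: x + (1 - t) *: y)
      <= t * f x + (1 - t) * f y - t * (1 - t) / 2 * nrm (x - y) ^+ 2.

Definition subgrad_on n (S : set (vec R n)) (f : vec R n -> R) (x g : vec R n)
  : Prop := forall x', S x' -> f x + dot g (x' - x) <= f x'.

Definition bregman n (f : vec R n -> R) (v g y : vec R n) : R :=
  f y - f v - dot g (y - v).

Definition conjugate n (f : vec R n -> R) (y : vec R n) : \bar R :=
  ereal_sup [set (dot x y - f x)%:E | x in [set: vec R n]].

Definition conj_dom n (f : vec R n -> R) : set (vec R n) :=
  [set y | (conjugate f y < +oo)%E].

Definition conjr n (f : vec R n -> R) (y : vec R n) : R := fine (conjugate f y).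

Definition is_argmin n (S : set (vec R n)) (F : vec R n -> R) (x : vec R n)
  : Prop := S x /\ forall x', S x' -> F x <= F x'.

End Defs.

(* Main.v *)
Require Import Defs.
From mathcomp Require Import all_boot all_algebra all_classical all_reals all_analysis.
From mathcomp Require Import ring lra.
From mathcomp Require Import all_order zify.
Import Order.TTheory GRing.Theory Num.Theory numFieldNormedType.Exports.
Set Implicit Arguments. Unset Strict Implicit.
Local Open Scope ring_scope.
Local Open Scope classical_set_scope.

Section Dot.
Variables (R : realType) (n : nat).
Implicit Types u v w : vec R n.
Lemma dotC u v : dot u v = dot v u.
Proof. by apply: eq_bigr => i _; rewrite mulrC. Qed.
Lemma dotDl u v w : dot (u + v) w = dot u w + dot v w.
Proof. by rewrite /dot -big_split; apply: eq_bigr => i _; rewrite mxE mulrDl. Qed.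
Lemma dotZl (a : R) u v : dot (a *: u) v = a * dot u v.
Proof. by rewrite /dot mulr_sumr; apply: eq_bigr => i _; rewrite mxE mulrA. Qed.
Lemma dotNl u v : dot (- u) v = - dot u v.
Proof. by rewrite /dot -sumrN; apply: eq_bigr => i _; rewrite mxE mulNr. Qed.
Lemma dotBl u v w : dot (u - v) w = dot u w - dot v w.
Proof. by rewrite dotDl dotNl. Qed.
Lemma dotDr u v w : dot u (v + w) = dot u v + dot u w.
Proof. by rewrite dotC dotDl !(dotC u). Qed.
Lemma dotZr (a : R) u v : dot u (a *: v) = a * dot u v.
Proof. by rewrite dotC dotZl dotC. Qed.
Lemma dotNr u v : dot u (- v) = - dot u v.
Proof. by rewrite dotC dotNl dotC. Qed.
Lemma dotBr u v w : dot u (v - w) = dot u v - dot u w.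
Proof. by rewrite dotDr dotNr. Qed.
Lemma dot0l v : dot 0 v = 0.
Proof. by rewrite /dot big1 // => i _; rewrite mxE mul0r. Qed.
Lemma dot0r v : dot v 0 = 0.
Proof. by rewrite dotC dot0l. Qed.
Lemma dot_self_ge0 v : 0 <= dot v v.
Proof. by rewrite /dot sumr_ge0 // => i _; rewrite -expr2 sqr_ge0. Qed.
Lemma dot_self_eq0 v : dot v v = 0 -> v = 0.
Proof.
move=> /eqP; rewrite /dot psumr_eq0; last by move=> i _; rewrite -expr2 sqr_ge0.
move=> /allP H; apply/rowP => i; rewrite mxE.
have /H : i \in index_enum 'I_n by rewrite mem_index_enum.
by rewrite /= mulf_eq0 orbb => /eqP.
Qed.
Lemma entry_le_norm v i : `|v 0 i| <= `|v|.
Proof.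
have -> : `|v| = mx_norm v by [].
rewrite mx_normrE; apply/bigmax_geP; right => /=.
by exists (0, i).
Qed.
Lemma dot_le_norm u v : dot u v <= (\sum_i `|u 0 i|) * `|v|.
Proof.
rewrite /dot mulr_suml; apply: ler_sum => i _.
apply: (le_trans (ler_norm _)); rewrite normrM ler_wpM2l //.
exact: entry_le_norm.
Qed.
End Dot.
Lemma lip_cont (R : realType) (V : normedModType R) (f : V -> R) (M : R) :
  0 <= M -> (forall a b, `|f a - f b| <= M * `|a - b|) -> continuous f.
Proof.
move=> M0 HM a; apply/cvgrPdist_lt => e e0.
have d0 : 0 < e / (M + 1) by rewrite divr_gt0 // ltr_wpDl.
have H := @cvgr_dist_lt _ _ _ (nbhs a) _ id a (@cvg_id _ (nbhs a)) _ d0.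
near=> b.
have hab : `|a - b| < e / (M + 1).
  near: b; exact: H.
apply: le_lt_trans (HM _ _) _.
apply: (@le_lt_trans _ _ (M * (e / (M + 1)))); first by rewrite ler_wpM2l // ltW.
rewrite mulrA ltr_pdivrMr ?ltr_wpDl //; nra.
Unshelve. all: by end_near.
Qed.

Section Norm.
Variables (R : realType) (n : nat) (nx : vec R n -> R) (Hn : is_norm nx).
Implicit Types u v w : vec R n.
Lemma nx_ge0 v : 0 <= nx v. Proof. by case: Hn. Qed.
Lemma nx_eq0 v : nx v = 0 -> v = 0. Proof. by case: Hn => _ H _ _; apply: H. Qed.
Lemma nxZ (a : R) v : nx (a *: v) = `|a| * nx v. Proof. by case: Hn. Qed.
Lemma nxD u v : nx (u + v) <= nx u + nx v. Proof. by case: Hn. Qed.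
Lemma nx0 : nx 0 = 0.
Proof. by rewrite -(scale0r (0 : vec R n)) nxZ normr0 mul0r. Qed.
Lemma nxN v : nx (- v) = nx v.
Proof. by rewrite -scaleN1r nxZ normrN normr1 mul1r. Qed.
Lemma nxB u v : nx (u - v) = nx (v - u).
Proof. by rewrite -nxN opprB. Qed.
Lemma nx_sum (I : Type) (r : seq I) (P : pred I) (F : I -> vec R n) :
  nx (\sum_(i <- r | P i) F i) <= \sum_(i <- r | P i) nx (F i).
Proof.
apply: (big_ind2 (fun a b => nx a <= b)); first by rewrite nx0.
by move=> a b c d H1 H2; apply: le_trans (nxD _ _) _; apply: lerD.
by [].
Qed.
Lemma nx_dist u v : `|nx u - nx v| <= nx (u - v).
Proof.
rewrite ler_norml; apply/andP; split.
  rewrite lerBrDl -lerBrDr opprK nxB.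
  by have := nxD u (v - u); rewrite addrC subrK addrC.
by rewrite lerBlDl; have := nxD v (u - v); rewrite addrC subrK addrC.
Qed.
Lemma nx_le_mx : exists M, 0 <= M /\ forall v, nx v <= M * `|v|.
Proof.
exists (\sum_j nx (delta_mx 0 j)); split; first by rewrite sumr_ge0 // => j _; exact: nx_ge0.
move=> v; rewrite {1}(row_sum_delta v) mulr_suml.
apply: le_trans (nx_sum _ _ _) _; apply: ler_sum => j _.
by rewrite nxZ mulrC ler_wpM2l ?nx_ge0 // entry_le_norm.
Qed.
Lemma nx_cont : continuous nx.
Proof.
have [M [M0 HM]] := nx_le_mx.
apply: (@lip_cont R 'rV[R^o]_n nx M M0) => a b.
exact: le_trans (nx_dist _ _) (HM _).
Qed.
Lemma nx_lb : exists c, 0 < c /\ forall v, c * `|v| <= nx v.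
Proof.
pose S := [set v : vec R n | `|v| = 1].
have Snorm v : v != 0 -> S (`|v|^-1 *: v).
  move=> v0; rewrite /S /= normrZ normfV normr_id mulVf //.
  by rewrite normr_eq0.
case: (pselect (S !=set0)) => [S0|S0]; last first.
  exists 1; split => // v; case: (eqVneq v 0) => [->|v0].
    by rewrite normr0 mulr0 nx0.
  by exfalso; apply: S0; exists (`|v|^-1 *: v); exact: Snorm.
have cS : compact S.
  apply: bounded_closed_compact.
    rewrite /= /bounded_near; near=> M => v /= ->.
    near: M; apply: nbhs_pinfty_ge; by rewrite num_real.
  have -> : S = (fun v : vec R n => `|v|) @^-1` [set x | x = 1] by [].
  by move: (@norm_continuous R^o 'rV[R^o]_n) => /continuous_closedP; apply; exact: closed_eq.
have [c0 /set_mem Sc0 Hc0] := compact_EVT_min S0 cS (continuous_subspaceT nx_cont).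
exists (nx c0); split.
  rewrite lt_def nx_ge0 andbT; apply/eqP => /nx_eq0 c00.
  by move: Sc0; rewrite /S /= c00 normr0 => /eqP; rewrite eq_sym oner_eq0.
move=> v; case: (eqVneq v 0) => [->|v0]; first by rewrite normr0 mulr0 nx0.
have := Hc0 _ (mem_set (Snorm v v0)); rewrite nxZ normfV normr_id.
by rewrite ler_pdivlMl ?normr_gt0 // mulrC.
Unshelve. all: by end_near.
Qed.
Lemma dual_bound g h : dot g h <= dual_norm nx g * nx h.
Proof.
set E := [set dot g x | x in [set x | nx x <= 1]].
have [c [c0 Hc]] := nx_lb.
have hE : has_sup E.
  split; first by exists (dot g 0), 0 => //=; rewrite nx0.
  exists ((\sum_i `|g 0 i|) / c) => _ [x /= Hx <-].
  apply: le_trans (@dot_le_norm _ _ _ _) _.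
  rewrite ler_wpM2l //; first by apply: sumr_ge0 => i _; exact: normr_ge0.
  by rewrite -(ler_pM2l c0) mulfV ?gt_eqF //; exact: le_trans (Hc x) Hx.
case: (eqVneq (nx h) 0) => [/nx_eq0 ->|h0]; first by rewrite dot0r nx0 mulr0.
have hpos : 0 < nx h by rewrite lt_def h0 nx_ge0.
have Hs : dot g ((nx h)^-1 *: h) <= dual_norm nx g.
  apply: (sup_upper_bound hE); exists ((nx h)^-1 *: h) => //=.
  by rewrite nxZ ger0_norm ?invr_ge0 ?nx_ge0 // mulVf.
have := ler_wpM2l (nx_ge0 h) Hs.
by rewrite dotZr mulrA mulfV // mul1r mulrC.
Qed.
End Norm.
Section Smooth.
Variables (R : realType) (n : nat) (ft : vec R n -> R^o) (gf : vec R n -> vec R n).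
Hypothesis Hd : forall v, differentiable ft v /\ forall d, 'd ft v d = dot (gf v) d.
Lemma line_deriv (s h : vec R n) (t : R) :
  is_derive t 1 (fun t : R => ft (s + t *: h)) (dot (gf (s + t *: h)) h).
Proof.
have E : (fun e : R => e^-1 *: ((fun t : R => ft (s + t *: h)) (e *: 1 + t) - (fun t : R => ft (s + t *: h)) t))
   = (fun e : R => e^-1 *: (ft (e *: h + (s + t *: h)) - ft (s + t *: h))).
  apply/funext => e /=; congr (_ *: (ft _ - _)).
  rewrite -[e%:A]/(e * 1) mulr1 scalerDl addrCA //.
have dft := (Hd (s + t *: h)).1.
have D : derivable (fun t : R => ft (s + t *: h)) t 1.
  rewrite /derivable E; exact: diff_derivable.
apply: DeriveDef => //.
have -> : 'D_1 (fun t : R => ft (s + t *: h)) t = 'D_h ft (s + t *: h) by rewrite /derive E.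
by rewrite deriveE // (Hd _).2.
Qed.
End Smooth.
Section Descent.
Variables (R : realType) (n : nat) (nx : vec R n -> R) (Hn : is_norm nx).
Variables (ft : vec R n -> R^o) (gf : vec R n -> vec R n) (Lt : R).
Hypothesis Hd : forall v, differentiable ft v /\ forall d, 'd ft v d = dot (gf v) d.
Hypothesis HL : forall v v', dual_norm nx (gf v - gf v') <= Lt * nx (v - v').

Lemma grad_lip s h t : 0 <= t -> `|dot (gf (s + t *: h) - gf s) h| <= Lt * t * nx h ^+ 2.
Proof.
move=> t0.
have H1 := dual_bound Hn (gf (s + t *: h) - gf s) h.
have H2 := dual_bound Hn (gf (s + t *: h) - gf s) (- h).
have H3 := HL (s + t *: h) s.
rewrite addrAC subrr add0r (nxZ Hn) (ger0_norm t0) in H3.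
rewrite (nxN Hn) dotNr in H2.
have := nx_ge0 Hn h => hh.
rewrite ler_norml; apply/andP; split; nra.
Qed.

Lemma phi_deriv (s h : vec R n) (c K : R) (x : R) :
  is_derive x (1:R) (fun t : R => ft (s + t *: h) - (t * c + t ^+ 2 * K))
    (dot (gf (s + x *: h)) h - (c + 2 * x * K)).
Proof.
have h1 := line_deriv Hd s h x.
have h2 : is_derive x (1:R) (fun t : R => t * c + t ^+ 2 * K) (c + 2 * x * K).
  have -> : (fun t : R => t * c + t ^+ 2 * K) = ((@id R^o) * cst c) + (((@id R^o) ^+ 2) * cst K) by apply/funext.
  apply: is_derive_eq.
  rewrite !scaler0 !add0r /=.
  rewrite -![_%:A]/(_ * 1) -![_ *: _]/(_ * _) !mulr1 expr1; ring.
exact: is_derive_eq.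
Qed.

Lemma descent_up (s h : vec R n) : ft (s + h) <= ft s + dot (gf s) h + Lt / 2 * nx h ^+ 2.
Proof.
set c := dot (gf s) h; set K := Lt / 2 * nx h ^+ 2.
pose phi := fun t : R => ft (s + t *: h) - (t * c + t ^+ 2 * K).
have D x := phi_deriv s h c K x.
have : phi 1 <= phi 0.
  apply: (@ler0_derive1_nincr _ phi 0 1) => //.
  - move=> x /[!in_itv] /andP[x0 _]; rewrite derive1E (@derive_val _ _ _ _ _ _ _ (D x)).
    have := grad_lip s h (ltW x0); rewrite ler_norml dotBl => /andP[_ H].
    have E : 2 * x * K = Lt * x * nx h ^+ 2 by rewrite /K; field.
    rewrite E /c; lra.
  - apply: continuous_subspaceT => x; apply: differentiable_continuous.
    apply/derivable1_diffP; exact: ex_derive.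
rewrite /phi scale1r scale0r addr0 mul1r expr1n mul1r mul0r expr0n /= mul0r addr0; lra.
Qed.

Lemma descent_lo (s h : vec R n) : ft s + dot (gf s) h - Lt / 2 * nx h ^+ 2 <= ft (s + h).
Proof.
set c := dot (gf s) h; set K := - (Lt / 2 * nx h ^+ 2).
pose phi := fun t : R => ft (s + t *: h) - (t * c + t ^+ 2 * K).
have D x := phi_deriv s h c K x.
have : phi 0 <= phi 1.
  apply: (@ger0_derive1_ndecr _ phi 0 1) => //.
  - move=> x /[!in_itv] /andP[x0 _]; rewrite derive1E (@derive_val _ _ _ _ _ _ _ (D x)).
    have := grad_lip s h (ltW x0); rewrite ler_norml dotBl => /andP[H _].
    have E : 2 * x * K = - (Lt * x * nx h ^+ 2) by rewrite /K; field.
    rewrite E /c; lra.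
  - apply: continuous_subspaceT => x; apply: differentiable_continuous.
    apply/derivable1_diffP; exact: ex_derive.
rewrite /phi scale1r scale0r addr0 mul1r expr1n mul1r mul0r expr0n /= mul0r addr0 /K; lra.
Qed.
End Descent.
Lemma eps_lemma (R : realType) (a b : R) :
  (forall t, 0 < t -> t <= 1 -> a <= b * t) -> a <= 0.
Proof.
move=> H; rewrite leNgt; apply/negP => a0.
pose t := a / (a + `|b| + 1).
have d0 : 0 < a + `|b| + 1 by have := normr_ge0 b; lra.
have t0 : 0 < t by rewrite divr_gt0.
have t1 : t <= 1 by rewrite ler_pdivrMr // mul1r; have := normr_ge0 b; lra.
have := H t t0 t1.
have : b * t <= `|b| * t by apply: ler_wpM2r; [exact: ltW | exact: ler_norm].
have : `|b| * t < a.
  rewrite /t mulrA ltr_pdivrMr //; have := normr_ge0 b; nra.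
lra.
Qed.

Section Conj.
Variables (R : realType) (n : nat) (nx : vec R n -> R) (Hn : is_norm nx).
Variables (ft : vec R n -> R^o) (gf : vec R n -> vec R n) (Lt : R).
Hypothesis Hd : forall v, differentiable ft v /\ forall d, 'd ft v d = dot (gf v) d.
Hypothesis HL : forall v v', dual_norm nx (gf v - gf v') <= Lt * nx (v - v').
Hypothesis Hc : convex_on setT ft.

Lemma grad_ineq (s x : vec R n) : ft s + dot (gf s) (x - s) <= ft x.
Proof.
rewrite -subr_ge0 -[X in _ <= X]opprK oppr_ge0.
apply: (@eps_lemma _ _ (Lt / 2 * nx (x - s) ^+ 2)) => t t0 t1.
have C : ft (t *: x + (1 - t) *: s) <= t * ft x + (1 - t) * ft s.
  by apply: Hc => //; rewrite (ltW t0) t1.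
have D := descent_lo Hn Hd HL s (t *: (x - s)).
have E : t *: x + (1 - t) *: s = s + t *: (x - s).
  by rewrite scalerBl scale1r scalerBr addrCA.
rewrite E (nxZ Hn) (ger0_norm (ltW t0)) dotZr in C D.
have F : ft s + t * dot (gf s) (x - s) - Lt / 2 * (t * nx (x - s)) ^+ 2 <= t * ft x + (1 - t) * ft s.
  exact: le_trans D C.
rewrite -subr_ge0; rewrite -(pmulr_rge0 _ t0).
have -> : t * (Lt / 2 * nx (x - s) ^+ 2 * t - - (ft x - (ft s + dot (gf s) (x - s))))
   = t * ft x + (1 - t) * ft s - (ft s + t * dot (gf s) (x - s) - Lt / 2 * (t * nx (x - s)) ^+ 2) by ring.
by rewrite subr_ge0.
Qed.
End Conj.
Section Conj2.
Variables (R : realType) (n : nat) (nx : vec R n -> R) (Hn : is_norm nx).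
Variables (ft : vec R n -> R^o) (gf : vec R n -> vec R n) (Lt : R).
Hypothesis Hd : forall v, differentiable ft v /\ forall d, 'd ft v d = dot (gf v) d.
Hypothesis HL : forall v v', dual_norm nx (gf v - gf v') <= Lt * nx (v - v').
Hypothesis Hc : convex_on setT ft.

Lemma conj_ge (y x : vec R n) : conj_dom ft y -> dot x y - ft x <= conjr ft y.
Proof.
rewrite /conj_dom /conjr /= => Hy.
have H : ((dot x y - ft x)%:E <= conjugate ft y)%E.
  by apply: ereal_sup_ubound; exists x.
have Hf : conjugate ft y \is a fin_num.
  rewrite fin_numE; apply/andP; split; last by rewrite lt_eqF.
  by apply/negP => /eqP E; rewrite E in H.
by rewrite -lee_fin fineK.
Qed.

Lemma conj_le (y : vec R n) (c : R) :
  (forall x, dot x y - ft x <= c) -> conj_dom ft y /\ conjr ft y <= c.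
Proof.
move=> H.
have H1 : (conjugate ft y <= c%:E)%E.
  by apply: ge_ereal_sup => _ [x _ <-]; rewrite lee_fin.
have Hd' : conj_dom ft y by rewrite /conj_dom /= (le_lt_trans H1) ?ltry.
split => //; have := conj_ge 0 Hd'.
have Hf : conjugate ft y \is a fin_num.
  rewrite fin_numE; apply/andP; split; last by rewrite lt_eqF.
  apply/negP => /eqP E.
  have : ((dot 0 y - ft 0)%:E <= conjugate ft y)%E by apply: ereal_sup_ubound; exists 0.
  by rewrite E.
by move=> _; rewrite /conjr -lee_fin fineK.
Qed.
End Conj2.
Section Conj3.
Variables (R : realType) (n : nat) (nx : vec R n -> R) (Hn : is_norm nx).
Variables (ft : vec R n -> R^o) (gf : vec R n -> vec R n) (Lt : R).
Hypothesis Hd : forall v, differentiable ft v /\ forall d, 'd ft v d = dot (gf v) d.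
Hypothesis HL : forall v v', dual_norm nx (gf v - gf v') <= Lt * nx (v - v').
Hypothesis Hc : convex_on setT ft.

Lemma grad_conj (s : vec R n) :
  conj_dom ft (gf s) /\ conjr ft (gf s) = dot s (gf s) - ft s.
Proof.
have H : forall x, dot x (gf s) - ft x <= dot s (gf s) - ft s.
  move=> x; have := grad_ineq Hn Hd HL Hc s x.
  rewrite dotBr (dotC (gf s) x) (dotC (gf s) s); lra.
have [D1 D2] := conj_le H; split => //.
by apply/eqP; rewrite eq_le D2 conj_ge.
Qed.

Lemma FY (v s0 : vec R n) : conj_dom ft v ->
  subgrad_on (conj_dom ft) (conjr ft) v s0 ->
  conjr ft v = dot s0 v - ft s0 /\ gf s0 = v.
Proof.
move=> Dv Sg.
have [Dg Cg] := grad_conj s0.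
have E : conjr ft v = dot s0 v - ft s0.
  apply/eqP; rewrite eq_le; apply/andP; split; last exact: conj_ge.
  have := Sg _ Dg; rewrite Cg dotBr; lra.
split => //.
set g := gf s0.
have K : forall h, dot h (v - g) <= 0.
  move=> h; apply: (@eps_lemma _ _ (Lt / 2 * nx h ^+ 2)) => t t0 t1.
  have A := conj_ge (s0 + t *: h) Dv.
  have B := descent_up Hn Hd HL s0 (t *: h).
  rewrite (nxZ Hn) (ger0_norm (ltW t0)) dotZr in B.
  rewrite E dotDl dotZl in A.
  rewrite dotBr (dotC h g).
  have : t * (dot h v - dot g h) <= t * (Lt / 2 * nx h ^+ 2 * t).
    have -> : t * (Lt / 2 * nx h ^+ 2 * t) = Lt / 2 * (t * nx h) ^+ 2 by ring.
    rewrite /g mulrBr; lra.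
  by rewrite ler_pM2l.
have := K (v - g) => K2.
have : dot (v - g) (v - g) = 0 by apply/eqP; rewrite eq_le K2 dot_self_ge0.
by move/dot_self_eq0/eqP; rewrite subr_eq0 => /eqP.
Qed.

Lemma W_bound (v s0 y' h : vec R n) : conj_dom ft v ->
  subgrad_on (conj_dom ft) (conjr ft) v s0 -> conj_dom ft y' ->
  dot h (y' - v) - Lt / 2 * nx h ^+ 2 <= bregman (conjr ft) v s0 y'.
Proof.
move=> Dv Sg Dy.
have [E G] := FY Dv Sg.
have A := conj_ge (s0 + h) Dy.
have B := descent_up Hn Hd HL s0 h.
rewrite G in B.
rewrite /bregman E !dotBr dotDl in A *.
rewrite (dotC v h) in B; lra.
Qed.
End Conj3.
Lemma convX (R : realType) (n : nat) (X : set (vec R n)) (cX : convex_set X) (t : R) (x y : vec R n) :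
  0 <= t -> t <= 1 -> X x -> X y -> X (t *: x + (1 - t) *: y).
Proof. move=> t0 t1 Xx Xy. have := cX _ _ (Itv01 t0 t1) (mem_set Xx) (mem_set Xy). by rewrite inE. Qed.

Lemma V_bound (R : realType) (n : nat) (nx : vec R n -> R) (X : set (vec R n))
  (nu : vec R n -> R) (dnu : vec R n -> vec R n) :
  is_norm nx -> convex_set X -> strongly_convex1_on X nx nu ->
  (forall v, X v -> subgrad_on X nu v (dnu v)) ->
  forall u v, X u -> X v -> 1 / 2 * nx (v - u) ^+ 2 <= bregman nu u (dnu u) v.
Proof.
move=> Hn cX SC SG u v Xu Xv.
rewrite -subr_le0.
apply: (@eps_lemma _ _ (nx (v - u) ^+ 2 / 2)) => t t0 t1.
have S1 : nu (t *: v + (1 - t) *: u) <= t * nu v + (1 - t) * nu u - t * (1 - t) / 2 * nx (v - u) ^+ 2.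
  by apply: SC => //; rewrite (ltW t0) t1.
have Xw := convX cX (ltW t0) t1 Xv Xu.
have S2 := SG u Xu _ Xw.
have E : t *: v + (1 - t) *: u - u = t *: (v - u).
  by rewrite scalerBl scale1r scalerBr (addrC u) addrA addrK.
rewrite E dotZr in S2.
rewrite /bregman.
have : t * (1 / 2 * nx (v - u) ^+ 2 - (nu v - nu u - dot (dnu u) (v - u))) <= t * (nx (v - u) ^+ 2 / 2 * t).
  rewrite mulrBr; nra.
by rewrite ler_pM2l.
Qed.

Lemma jensen_sq (R : realType) (n : nat) (nx : vec R n -> R) (Hn : is_norm nx)
  (T : nat) (F : nat -> vec R n) (x : vec R n) : (0 < T)%N ->
  nx (x - T%:R^-1 *: \sum_(1 <= t < T.+1) F t) ^+ 2 <=
  T%:R^-1 * \sum_(1 <= t < T.+1) nx (F t - x) ^+ 2.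
Proof.
move=> T0.
have Tp : 0 < (T%:R : R) by rewrite ltr0n.
have E : x - T%:R^-1 *: \sum_(1 <= t < T.+1) F t = T%:R^-1 *: \sum_(1 <= t < T.+1) (x - F t).
  rewrite sumrB sumr_const_nat subSS subn0 scalerBr.
  have -> : T%:R^-1 *: (x *+ T) = x.
    rewrite -[x *+ T]scaler_nat scalerA mulVf ?scale1r // pnatr_eq0 -lt0n; exact: T0.
  by [].
rewrite E (nxZ Hn) ger0_norm ?invr_ge0 ?ler0n //.
set S1 := \sum_(1 <= t < T.+1) nx (F t - x).
set S2 := \sum_(1 <= t < T.+1) nx (F t - x) ^+ 2.
have L1 : nx (\sum_(1 <= t < T.+1) (x - F t)) <= S1.
  apply: le_trans (nx_sum Hn _ _ _) _; apply: ler_sum => t _; rewrite (nxB Hn); exact: lexx.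
have L0 : 0 <= nx (\sum_(1 <= t < T.+1) (x - F t)) by exact: nx_ge0.
pose m := S1 / T%:R.
have L2 : 0 <= \sum_(1 <= t < T.+1) (nx (F t - x) - m) ^+ 2.
  by apply: sumr_ge0 => t _; exact: sqr_ge0.
have L3 : \sum_(1 <= t < T.+1) (nx (F t - x) - m) ^+ 2 = S2 - 2 * m * S1 + T%:R * m ^+ 2.
  have H t : (nx (F t - x) - m) ^+ 2 = nx (F t - x) ^+ 2 + (- (2 * m)) * nx (F t - x) + m ^+ 2 by ring.
  rewrite (eq_bigr _ (fun t _ => H t)) !big_split /= -mulr_sumr sumr_const_nat subSS subn0.
  rewrite /S1 /S2 -mulr_natl; ring.
have L4 : T%:R * m = S1 by rewrite /m mulrC divfK ?gt_eqF.
have L5 : S1 ^+ 2 <= T%:R * S2.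
  have : 0 <= S2 - 2 * m * S1 + T%:R * m ^+ 2 by rewrite -L3.
  rewrite -L4; nra.
have L6 : 0 <= S1 by apply: sumr_ge0 => t _; exact: nx_ge0.
rewrite exprMn; apply: (@le_trans _ _ (T%:R^-1 ^+ 2 * S1 ^+ 2)).
  by apply: ler_wpM2l; [exact: sqr_ge0 | rewrite ler_sqr ?nnegrE].
rewrite expr2 -mulrA ler_wpM2l ?invr_ge0 ?ler0n // ler_pdivrMl //.
Qed.
Lemma key_step (R : realType) (b' bM l tau pM Lt D1 Wy nd : R) :
  0 < b' -> 0 <= tau -> bM = b' * l -> 0 < bM -> Lt * l <= pM * tau -> 0 <= pM ->
  0 <= nd -> (forall c, - c * D1 - Lt / 2 * (c ^+ 2 * nd) <= Wy) ->
  0 <= bM * D1 + b' * tau * Wy + bM * pM / 2 * nd.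
Proof.
move=> b0 t0 Eb bM0 HL p0 nd0 HW.
have l0 : 0 < l.
  by move: bM0; rewrite Eb pmulr_rgt0.
case: (eqVneq tau 0) => [tz|tnz].
  rewrite tz in HL; rewrite tz mulr0 mul0r addr0.
  have Lt0 : Lt <= 0 by move: HL; rewrite mulr0 pmulr_lle0.
  have HW' c : - c * D1 <= Wy.
    have := HW c; have : 0 <= c ^+ 2 * nd by rewrite mulr_ge0 // sqr_ge0.
    nra.
  have D10 : D1 = 0.
    apply/eqP; apply/negP => /negP D1n.
    have := HW' (- ((`|Wy| + 1) / D1)).
    rewrite !mulNr opprK divfK //.
    have := ler_norm Wy; lra.
  rewrite D10 mulr0 add0r; apply: mulr_ge0 => //; apply: mulr_ge0 => //.
  by apply: mulr_ge0 => //; exact: ltW.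
have tp : 0 < tau by rewrite lt_def tnz t0.
have H1 := HW (l / tau).
have H2 : b' * tau * (- (l / tau) * D1 - Lt / 2 * ((l / tau) ^+ 2 * nd)) <= b' * tau * Wy.
  by rewrite ler_wpM2l // mulr_ge0 // ltW.
have E : b' * tau * (- (l / tau) * D1 - Lt / 2 * ((l / tau) ^+ 2 * nd))
   = - bM * D1 - (b' * l * nd / (2 * tau)) * (Lt * l).
  by rewrite Eb; field; rewrite tnz.
have E2 : bM * pM / 2 * nd = (b' * l * nd / (2 * tau)) * (pM * tau).
  by rewrite Eb; field; rewrite tnz.
rewrite E in H2; rewrite E2.
have X0 : 0 <= b' * l * nd / (2 * tau).
  apply: divr_ge0; last by apply: mulr_ge0 => //; exact: ltW.
  by apply: mulr_ge0 => //; apply: mulr_ge0; exact: ltW.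
set X := b' * l * nd / (2 * tau) in H2 X0 *; clearbody X.
have H3 : X * (Lt * l) <= X * (pM * tau) by rewrite ler_wpM2l.
lra.
Qed.
Theorem lemma5p2 (R : realType) (n m : nat)
  (nx : vec R n -> R) (nz : vec R m -> R)
  (X : set (vec R n)) (Z : set (vec R m))
  (A : 'M[R^o]_(n, m)) (h : vec R m -> R) (mu : R)
  (nu : vec R n -> R) (dnu : vec R n -> vec R n)
  (zeta : vec R m -> R) (dzeta : vec R m -> vec R m)
  (ft : vec R n -> R^o) (gf : vec R n -> vec R n) (Lt : R)
  (N : nat) (lam tau beta p : nat -> R) (T : nat -> nat)
  (q eta alpha : nat -> nat -> R)
  (x xh xt y s : nat -> vec R n) (z zh : nat -> vec R m)
  (xi ut : nat -> nat -> vec R n) (zi : nat -> nat -> vec R m) :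
  (* the spaces, norms and functions *)
  is_norm nx -> is_norm nz ->
  closed X -> convex_set X -> closed Z -> convex_set Z ->
  convex_on Z h -> 0 <= mu ->
  strongly_convex1_on X nx nu -> (forall v, X v -> subgrad_on X nu v (dnu v)) ->
  strongly_convex1_on Z nz zeta ->
  (forall v, Z v -> subgrad_on Z zeta v (dzeta v)) ->
  convex_on setT ft ->
  (forall v, differentiable ft v /\ forall d, 'd ft v d = dot (gf v) d) ->
  (forall v v', dual_norm nx (gf v - gf v') <= Lt * nx (v - v')) ->
  (* parameters *)
  (forall k, 0 <= lam k) -> (forall k, 0 <= tau k) ->
  (forall k, 0 < beta k) -> (forall k, 0 < p k) ->
  (forall k, 0 < T k)%N ->
  (forall k t, 0 < q k t) -> (forall k t, 0 < eta k t) ->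
  tau 1%N = 0 ->
  (forall k, (2 <= k)%N -> beta k * tau k <= beta k.-1 * (tau k.-1 + 1)) ->
  (forall k, (2 <= k)%N -> beta k.-1 = beta k * lam k) ->
  (forall k, (2 <= k)%N -> Lt * lam k <= p k.-1 * tau k) ->
  (1 <= N)%N ->
  (* initialization *)
  X (x 0%N) -> conj_dom ft (y 0%N) -> Z (z 0%N) -> xh 0%N = x 0%N ->
  subgrad_on (conj_dom ft) (conjr ft) (y 0%N) (s 0%N) ->
  (* outer iteration k = 1..N *)
  (forall k, (1 <= k <= N)%N ->
     xt k = x k.-1 + lam k *: (xh k.-1 - x (k - 2)%N)) ->
  (forall k, (1 <= k <= N)%N ->
     is_argmin (conj_dom ft)
       (fun v => - dot (xt k) v + conjr ft v
                 + tau k * bregman (conjr ft) (y k.-1) (s k.-1) v) (y k)) ->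
  (* The subgradient of f~^* at y_k: the one given by the optimality condition of the
     y-step, used in W(y_k, .) *)
  (forall k, (1 <= k <= N)%N ->
     s k = (1 + tau k)^-1 *: (xt k + tau k *: s k.-1)) ->
  (forall k, (1 <= k <= N)%N -> xi k 0%N = x k.-1 /\ zi k 0%N = z k.-1) ->
  (forall k, (1 <= k <= N)%N ->
     ut k 1%N = xi k 0%N + alpha k 1%N *:
       (xi k 0%N - (if k == 1%N then x 0%N else xi k.-1 (T k.-1).-1))) ->
  (forall k t, (1 <= k <= N)%N -> (2 <= t <= T k)%N ->
     ut k t = xi k t.-1 + alpha k t *: (xi k t.-1 - xi k (t - 2)%N)) ->
  (forall k t, (1 <= k <= N)%N -> (1 <= t <= T k)%N ->
     is_argmin Z
       (fun w => h w - dot (ut k t *m A) w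
                 + q k t * bregman zeta (zi k t.-1) (dzeta (zi k t.-1)) w)
       (zi k t)) ->
  (forall k t, (1 <= k <= N)%N -> (1 <= t <= T k)%N ->
     is_argmin X
       (fun v => mu * nu v + dot (y k + zi k t *m A^T) v
                 + eta k t * bregman nu (xi k t.-1) (dnu (xi k t.-1)) v
                 + p k * bregman nu (x k.-1) (dnu (x k.-1)) v)
       (xi k t)) ->
  (forall k, (1 <= k <= N)%N ->
     [/\ x k = xi k (T k), z k = zi k (T k),
         xh k = (T k)%:R^-1 *: \sum_(1 <= t < (T k).+1) xi k t
       & zh k = (T k)%:R^-1 *: \sum_(1 <= t < (T k).+1) zi k t]) ->
  (* conclusion *)
  forall (u w : vec R n), X u -> conj_dom ft w ->
    \sum_(1 <= k < N.+1) beta k *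
      ( - dot (xh k) w + dot u (y k) + dot (y k) (xh k - u)
        - conjr ft (y k) + conjr ft w
        + p k / (T k)%:R *
            \sum_(1 <= t < (T k).+1) bregman nu (x k.-1) (dnu (x k.-1)) (xi k t))
    >= - beta N * dot (x N.-1 - xh N) (y N - w)
       + beta N * p N / 2 * nx (x N.-1 - xh N) ^+ 2
       + beta N * (tau N + 1) * bregman (conjr ft) (y N) (s N) w.
Proof.
move=> Hnx Hnz cX cvX cZ cvZ hconv mu0 SCnu SGnu SCz SGz Fconv Fdiff FL lam0 tau0 beta0 p0 T0 q0 eta0 tau1 Hbt Hbl HLl N1 X0 Y0 Z0 xh0 S0 Hxt Hy Hs Hxi0 Hut1 Hut Hz Hx Hfin u w Xu Dw.
pose W j v := bregman (conjr ft) (y j) (s j) v.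
have Fid : forall k v, (1 <= k <= N)%N ->
  (- dot (xt k) v + conjr ft v + tau k * W k.-1 v)
  - (- dot (xt k) (y k) + conjr ft (y k) + tau k * W k.-1 (y k))
  = (1 + tau k) * W k v.
  move=> k v Hk; rewrite /W /bregman (Hs k Hk) dotZl dotDl dotZl !dotBr.
  have t1 : 1 + tau k != 0 by apply: lt0r_neq0; have := tau0 k; lra.
  by field.
have Fsg : forall j, (j <= N)%N ->
  conj_dom ft (y j) /\ subgrad_on (conj_dom ft) (conjr ft) (y j) (s j).
  case=> [_|j Hj]; first by split.
  have Hk : (1 <= j.+1 <= N)%N by rewrite Hj.
  have [Dy Hmin] := Hy _ Hk; split => // v Dv.
  have := Hmin v Dv; have := Fid _ v Hk => /= E Hle.
  have : 0 <= (1 + tau j.+1) * W j.+1 v by rewrite -E subr_ge0.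
  rewrite pmulr_rge0; last by have := tau0 j.+1; lra.
  by rewrite /W /bregman; lra.
have FX : forall k, (k <= N)%N -> X (x k).
  case=> [|k Hk] //.
  have Hk' : (1 <= k.+1 <= N)%N by rewrite Hk.
  have [-> _ _ _] := Hfin _ Hk'.
  have Ht : (1 <= T k.+1 <= T k.+1)%N by rewrite T0 leqnn.
  by case: (Hx _ _ Hk' Ht).
have FXi : forall k t, (1 <= k <= N)%N -> (1 <= t <= T k)%N -> X (xi k t).
  by move=> k t Hk Ht; case: (Hx k t Hk Ht).
have FV : forall k, (1 <= k <= N)%N ->
  p k / 2 * nx (x k.-1 - xh k) ^+ 2 <=
  p k / (T k)%:R * \sum_(1 <= t < (T k).+1) bregman nu (x k.-1) (dnu (x k.-1)) (xi k t).
  move=> k Hk.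
  have Xk : X (x k.-1) by apply: FX; lia.
  have [_ _ Exh _] := Hfin k Hk.
  have J := jensen_sq Hnx (xi k) (x k.-1) (T0 k); rewrite -Exh in J.
  have S : \sum_(1 <= t < (T k).+1) (1 / 2 * nx (xi k t - x k.-1) ^+ 2) <=
           \sum_(1 <= t < (T k).+1) bregman nu (x k.-1) (dnu (x k.-1)) (xi k t).
    apply: ler_sum_nat => t Ht; apply: (V_bound Hnx cvX SCnu SGnu) => //.
    by apply: FXi => //; lia.
  rewrite -mulr_sumr in S.
  have Tp : 0 < ((T k)%:R : R) by rewrite ltr0n.
  have pk := p0 k.
  apply: (@le_trans _ _ (p k / 2 * ((T k)%:R^-1 * \sum_(1 <= t < (T k).+1) nx (xi k t - x k.-1) ^+ 2))).
    by rewrite ler_wpM2l // divr_ge0 // ltW.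
  have -> : p k / 2 * ((T k)%:R^-1 * \sum_(1 <= t < (T k).+1) nx (xi k t - x k.-1) ^+ 2)
          = p k / (T k)%:R * (1 / 2 * \sum_(1 <= t < (T k).+1) nx (xi k t - x k.-1) ^+ 2).
    by ring.
  by rewrite ler_wpM2l // divr_ge0 // ltW.
have FWb : forall M, (M < N)%N -> forall h,
    dot h (y M.+1 - y M) - Lt / 2 * nx h ^+ 2 <= W M (y M.+1).
  move=> M HM hh.
  have [D1 S1] := Fsg M (ltnW HM).
  have [D2 _] := Fsg M.+1 HM.
  exact: (W_bound Hnx Fdiff FL Fconv hh D1 S1 D2).
have FWw : forall M, (M <= N)%N -> 0 <= W M w.
  move=> M HM; have [_ S1] := Fsg M HM.
  by have := S1 w Dw; rewrite /W /bregman; lra.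
have Fbr : forall k, (1 <= k <= N)%N ->
  dot (xh k - xt k) (y k - w) + tau k * W k.-1 (y k) + (tau k + 1) * W k w
    - tau k * W k.-1 w + p k / 2 * nx (x k.-1 - xh k) ^+ 2
  <= - dot (xh k) w + dot u (y k) + dot (y k) (xh k - u) - conjr ft (y k) + conjr ft w
     + p k / (T k)%:R * \sum_(1 <= t < (T k).+1) bregman nu (x k.-1) (dnu (x k.-1)) (xi k t).
  move=> k Hk; have E := Fid k w Hk; have V := FV k Hk.
  rewrite !dotBl !dotBr (dotC (y k) (xh k)) (dotC (y k) u).
  lra.
pose Br k := - dot (xh k) w + dot u (y k) + dot (y k) (xh k - u) - conjr ft (y k) + conjr ft w
     + p k / (T k)%:R * \sum_(1 <= t < (T k).+1) bregman nu (x k.-1) (dnu (x k.-1)) (xi k t).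
have Main : forall M, (1 <= M <= N)%N ->
  - beta M * dot (x M.-1 - xh M) (y M - w) + beta M * p M / 2 * nx (x M.-1 - xh M) ^+ 2
  + beta M * (tau M + 1) * W M w <= \sum_(1 <= k < M.+1) beta k * Br k.
  elim=> [//|M IH] HM.
  case: (posnP M) => [M0|Mpos].
    subst M; rewrite big_nat1.
    have B : _ <= Br 1 := Fbr 1 HM.
    rewrite (Hxt 1 HM) /= in B.
    rewrite (_ : (1 - 2)%N = 0%N) // xh0 subrr scaler0 addr0 tau1 in B.
    have := ler_wpM2l (ltW (beta0 1)) B.
    rewrite tau1 !dotBl !dotBr.
    lra.
  have HM' : (1 <= M <= N)%N by lia.
  have IH' := IH HM'.
  have HMN : (M < N)%N by lia.
  rewrite big_nat_recr //=.
  have B : _ <= Br M.+1 := Fbr M.+1 HM.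
  rewrite (Hxt M.+1 HM) /= in B.
  rewrite (_ : (M.+1 - 2)%N = M.-1) in B; last by lia.
  have Hk2 : (2 <= M.+1)%N by lia.
  have HW : forall c, - c * dot (x M.-1 - xh M) (y M.+1 - y M)
      - Lt / 2 * (c ^+ 2 * nx (x M.-1 - xh M) ^+ 2) <= W M (y M.+1).
    move=> c; have := FWb M HMN (- c *: (x M.-1 - xh M)).
    by rewrite dotZl (nxZ Hnx) exprMn real_normK ?num_real // sqrrN.
  have K := key_step (beta0 M.+1) (tau0 M.+1) (Hbl M.+1 Hk2) (beta0 M) (HLl M.+1 Hk2)
     (ltW (p0 M)) (sqr_ge0 _) HW.
  have HB := Hbt M.+1 Hk2; have Eb := Hbl M.+1 Hk2; rewrite /= in K HB Eb.
  have P1 := ler_wpM2l (ltW (beta0 M.+1)) B.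
  have P2 : 0 <= (beta M * (tau M + 1) - beta M.+1 * tau M.+1) * W M w.
    by apply: mulr_ge0; [rewrite subr_ge0 | apply: FWw; lia].
  rewrite Eb in IH' K P2.
  rewrite !dotBl !dotBr ?dotDl ?dotZl ?dotBl ?dotBr in IH' K P1 *.
  lra.
have := Main N; rewrite N1 leqnn => /(_ isT).
by rewrite /W /Br.
Qed.
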